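(* Let $\mathcal{H}$ be a separable infinite-dimensional complex Hilbert space and let $T\in\mathcal{B}(\mathcal{H})$ be quasinilpotent. Then the power set $\Lambda(T)$ is right closed; that is, $\sup Y\in\Lambda(T)$ for every nonempty subset $Y\subseteq\Lambda(T)$.
   Context: An operator $T\in\mathcal{B}(\mathcal{H})$ is quasinilpotent if $\sigma(T)=\{0\}$. For quasinilpotent $T$ and $x\in\mathcal{H}\setminus\{0\}$, set $k_x=k_x(T)=\limsup_{\lambda\to0}\frac{\ln\|(\lambda-T)^{-1}x\|}{\ln\|(\lambda-T)^{-1}\|}$, and define the power set $\Lambda(T)=\{k_x: x\neq0\}$ (it is a subset of $[0,1]$). A nonempty set $X\subseteq\mathbb{R}$ is called right closed if $\sup Y\in X$ for every nonempty bounded subset $Y$ of $X$. *)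

(* Defs.v *)
From HB Require Import structures.
From Stdlib Require Import ClassicalEpsilon.
From mathcomp Require Import all_boot all_order all_algebra.
From mathcomp Require Import complex.
From mathcomp Require Import all_classical all_reals all_analysis.
Import Order.TTheory GRing.Theory Num.Theory.

Set Implicit Arguments.
Unset Strict Implicit.
Unset Printing Implicit Defensive.

Local Open Scope classical_set_scope.
Local Open Scope ring_scope.

Section QuasinilpotentPowerSet.
Variable R : realType.
Local Notation C := R[i].
Variable V : lmodType C.
Variable ip : V -> V -> C.

Record inner_product : Prop := {
  ip_linl : forall (a : C) (x y z : V), ip (a *: x + y) z = a * ip x z + ip y z;
  ip_conj_sym : forall x y : V, ip y x = (ip x y)^*;
  ip_ge0 : forall x : V, 0 <= ip x x;
  ip_def : forall x : V, ip x x = 0 -> x = 0 }.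

Definition hnorm (x : V) : R := Num.sqrt (complex.Re (ip x x)).

Definition complete_ip : Prop :=
  forall u : nat -> V,
    (forall e : R, 0 < e -> exists N : nat, forall m n : nat,
        (N <= m)%N -> (N <= n)%N -> hnorm (u m - u n) < e) ->
    exists l : V, forall e : R, 0 < e -> exists N : nat, forall n : nat,
        (N <= n)%N -> hnorm (u n - l) < e.

Definition hilbert_space : Prop := inner_product /\ complete_ip.

Definition separable : Prop :=
  exists d : nat -> V, forall (x : V) (e : R), 0 < e -> exists n : nat, hnorm (x - d n) < e.

Definition infinite_dimensional : Prop :=
  forall n : nat, exists v : 'I_n -> V,
    forall c : 'I_n -> C, \sum_(i < n) c i *: v i = 0 -> forall i, c i = 0.

Definition bounded_op (T : V -> V) : Prop :=
  linear T /\ exists M : R, forall x : V, hnorm (T x) <= M * hnorm x.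

Definition is_inverse_op (T S : V -> V) : Prop :=
  bounded_op S /\ (forall x, S (T x) = x) /\ (forall x, T (S x) = x).

Definition invertible_op (T : V -> V) : Prop := exists S, is_inverse_op T S.

Definition shift_op (l : C) (T : V -> V) : V -> V := fun x => l *: x - T x.

Definition spectrum (T : V -> V) : set C :=
  [set l | ~ invertible_op (shift_op l T)].

Definition quasinilpotent (T : V -> V) : Prop :=
  bounded_op T /\ spectrum T = [set 0].

Definition op_norm (S : V -> V) : R :=
  sup [set hnorm (S x) | x in [set x : V | hnorm x <= 1]].

(* (l - T)^{-1} (an arbitrary function when l - T is not invertible) *)
Definition resolvent (T : V -> V) (l : C) : V -> V :=
  epsilon (inhabits id) (fun S => is_inverse_op (shift_op l T) S).

Definition power_quotient (T : V -> V) (x : V) (l : C) : R :=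
  ln (hnorm (resolvent T l x)) / ln (op_norm (resolvent T l)).

(* k_x = limsup_{l -> 0, l <> 0} power_quotient, as inf_{r>0} sup_{0<|l|<r} *)
Definition k_x (T : V -> V) (x : V) : \bar R :=
  ereal_inf [set ereal_sup [set (power_quotient T x l)%:E
                            | l in [set l : C | 0 < complex.ComplexField.Normc.normc l < r]]
            | r in [set r : R | 0 < r]].

Definition power_set (T : V -> V) : set (\bar R) :=
  [set k_x T x | x in [set x : V | x <> 0]].

End QuasinilpotentPowerSet.

(* right closedness (sup taken in the extended reals; every subset of \bar R is bounded) *)
Definition right_closed (R : realType) (X : set (\bar R)) : Prop :=
  forall Y : set (\bar R), Y !=set0 -> Y `<=` X -> X (ereal_sup Y).

(* Main.v *)
Require Import Defs.
From Stdlib Require Import ClassicalEpsilon.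
From mathcomp Require Import all_boot all_order all_algebra complex all_classical all_reals all_analysis.
From mathcomp Require Import ring lra.
Import Order.TTheory GRing.Theory Num.Theory.
Set Implicit Arguments.
Unset Strict Implicit.
Unset Printing Implicit Defensive.
Local Open Scope ring_scope.

Section Norm.
Variable R : realType.
Local Notation C := R[i].
Variable V : lmodType C.
Variable ip : V -> V -> C.
Hypothesis hip : inner_product ip.
Local Notation nc := (complex.ComplexField.Normc.normc).
Local Notation hn := (hnorm ip).

Lemma nc_ge0 (a : C) : 0 <= nc a.
Proof. case: a => a b /=; exact: sqrtr_ge0. Qed.

Lemma ncE (a : C) : nc a = complex.Re `|a|.
Proof. by []. Qed.

Lemma ReJ (w : C) : complex.Re (w^*) = complex.Re w.
Proof. by case: w. Qed.

Lemma ip_linr (a : C) (x y z : V) : ip z (a *: x + y) = a^* * ip z x + ip z y.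
Proof.
rewrite [ip z (_ + _)](ip_conj_sym hip) [ip z x](ip_conj_sym hip) [ip z y](ip_conj_sym hip).
by rewrite (ip_linl hip) rmorphD rmorphM.
Qed.

Lemma ipDl x y z : ip (x + y) z = ip x z + ip y z.
Proof. by rewrite -[x]scale1r (ip_linl hip) mul1r scale1r. Qed.

Lemma ipZl a x z : ip (a *: x) z = a * ip x z.
Proof.
have h0 : ip 0 z = 0.
  have := ip_linl hip 1 0 0 z; rewrite scale1r addr0 mul1r => h.
  by apply: (@addrI _ (ip 0 z)); rewrite addr0 -h.
by rewrite -[a *: x]addr0 (ip_linl hip) h0 addr0.
Qed.

Lemma ipDr x y z : ip z (x + y) = ip z x + ip z y.
Proof. by rewrite -[x]scale1r ip_linr rmorph1 mul1r scale1r. Qed.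

Lemma ipZr a x z : ip z (a *: x) = a^* * ip z x.
Proof.
have h0 : ip z 0 = 0.
  have := ip_linr 1 0 0 z; rewrite scale1r addr0 rmorph1 mul1r => h.
  by apply: (@addrI _ (ip z 0)); rewrite addr0 -h.
by rewrite -[a *: x]addr0 ip_linr h0 addr0.
Qed.

Lemma ip0r z : ip z 0 = 0.
Proof. by rewrite -(scale0r (0:V)) ipZr rmorph0 mul0r. Qed.

Lemma ip0l z : ip 0 z = 0.
Proof. by rewrite -(scale0r (0:V)) ipZl mul0r. Qed.

Lemma ipxx_real x : ip x x = (((complex.Re (ip x x))%:C)%C)%C%C.
Proof.
have := ip_ge0 hip x; rewrite lecE => /andP[/eqP h _].
by move: h; case: (ip x x) => a b /= ->.
Qed.

Lemma Re_ipxx_ge0 x : 0 <= complex.Re (ip x x).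
Proof. by have := ip_ge0 hip x; rewrite lecE => /andP[_]. Qed.

Lemma hn_ge0 x : 0 <= hn x.
Proof. exact: sqrtr_ge0. Qed.

Lemma hn_sqr x : hn x ^+ 2 = complex.Re (ip x x).
Proof. by rewrite /hnorm sqr_sqrtr // Re_ipxx_ge0. Qed.

Lemma hn_eq0 x : hn x = 0 -> x = 0.
Proof.
move=> h; apply: (ip_def hip); rewrite ipxx_real -hn_sqr h.
by rewrite expr0n.
Qed.

Lemma hn0 : hn 0 = 0.
Proof. by rewrite /hnorm ip0l /= sqrtr0. Qed.

Lemma hnZ a x : hn (a *: x) = nc a * hn x.
Proof.
rewrite /hnorm ipZl ipZr mulrA -normCK ipxx_real.
have -> : (`|a| ^+ 2 * (((complex.Re (ip x x))%:C)%C)%C) = (nc a ^+ 2 * complex.Re (ip x x))%:C%C.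
  by rewrite rmorphM rmorphXn.
rewrite /= sqrtrM ?sqr_ge0 // sqrtr_sqr ger0_norm //; exact: nc_ge0.
Qed.

Lemma hnN x : hn (- x) = hn x.
Proof.
rewrite -scaleN1r hnZ.
have -> : nc (-1 : C) = 1 by rewrite ncE normrN1.
by rewrite mul1r.
Qed.

Lemma Re_ip_sym x y : complex.Re (ip y x) = complex.Re (ip x y).
Proof. by rewrite (ip_conj_sym hip) ReJ. Qed.

Lemma expand_real (t : R) x y :
  complex.Re (ip (x + (t%:C)%C *: y) (x + (t%:C)%C *: y)) =
  complex.Re (ip x x) + 2 * t * complex.Re (ip x y) + t ^+ 2 * complex.Re (ip y y).
Proof.
rewrite !ipDl !ipDr !ipZl !ipZr conj_Creal; last by apply/complex_realP; eexists.
rewrite !raddfD /=.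
have hm : forall (u : R) (w : C), complex.Re ((u%:C)%C * w) = u * complex.Re w.
  by move=> u [a b] /=; rewrite mul0r subr0.
rewrite !hm (Re_ip_sym y x) mulrA -expr2.
rewrite -!addrA; congr (_ + _); rewrite addrCA !addrA; congr (_ + _).
by rewrite -mulrA mulr2n mulrDl mul1r.
Qed.

Lemma Re_ip_le x y : complex.Re (ip x y) <= hn x * hn y.
Proof.
set A := complex.Re (ip x y).
have [hy0|hyp] := eqVneq (hn y) 0.
  by rewrite /A (hn_eq0 hy0) ip0r hn0 mulr0.
have Yp : 0 < hn y ^+ 2 by rewrite exprn_gt0 // lt_neqAle eq_sym hyp hn_ge0.
have h := Re_ipxx_ge0 (x + ((- A / hn y ^+ 2)%:C)%C *: y).
rewrite expand_real -!hn_sqr in h.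
have key : A ^+ 2 <= hn x ^+ 2 * hn y ^+ 2.
  have e : hn x ^+ 2 + 2 * (- A / hn y ^+ 2) * A + (- A / hn y ^+ 2) ^+ 2 * hn y ^+ 2
      = hn x ^+ 2 - A ^+ 2 / hn y ^+ 2.
    move: (hn y) (hn x) (A) hyp => b c a hb; field; exact: hb.
  rewrite e subr_ge0 ler_pdivrMr // in h.
have : `|A| <= hn x * hn y.
  rewrite -(ger0_norm (mulr_ge0 (hn_ge0 x) (hn_ge0 y))).
  rewrite -ler_sqr ?nnegrE ?normr_ge0 // !real_normK ?num_real //. by rewrite exprMn.
exact: le_trans (ler_norm _).
Qed.

Lemma hnD x y : hn (x + y) <= hn x + hn y.
Proof.
rewrite -ler_sqr ?nnegrE ?addr_ge0 ?hn_ge0 //.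
have e := expand_real 1 x y; rewrite rmorph1 scale1r in e; rewrite hn_sqr e.
rewrite -!hn_sqr mulr1 expr1n mul1r sqrrD.
have := Re_ip_le x y; lra.
Qed.
End Norm.

From Stdlib Require Import ClassicalEpsilon.
From mathcomp Require Import all_boot all_order all_algebra complex all_classical all_reals all_analysis.
From mathcomp Require Import ring lra.
Import Order.TTheory GRing.Theory Num.Theory.
Set Implicit Arguments.
Unset Strict Implicit.
Unset Printing Implicit Defensive.
Local Open Scope ring_scope.

Section Ops.
Variable R : realType.
Local Notation C := R[i].
Variable V : lmodType C.
Variable ip : V -> V -> C.
Hypothesis hip : inner_product ip.
Local Notation nc := (complex.ComplexField.Normc.normc).
Local Notation hn := (hnorm ip).

Section Lin.
Variable f : V -> V.
Hypothesis hf : linear f.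
Lemma lin0 : f 0 = 0.
Proof.
have := hf 1 0 0; rewrite scale1r addr0 scale1r => h.
by apply: (@addrI _ (f 0)); rewrite addr0 -h.
Qed.
Lemma linD u v : f (u + v) = f u + f v.
Proof. by have := hf 1 u v; rewrite !scale1r. Qed.
Lemma linZ a u : f (a *: u) = a *: f u.
Proof. by have := hf a u 0; rewrite !addr0 lin0 addr0. Qed.
Lemma linN u : f (- u) = - f u.
Proof. by rewrite -scaleN1r linZ scaleN1r. Qed.
Lemma linB u v : f (u - v) = f u - f v.
Proof. by rewrite linD linN. Qed.
End Lin.

Lemma nc_real (c : R) : nc ((c%:C)%C : C) = `|c|.
Proof. by rewrite /= expr0n /= addr0 sqrtr_sqr. Qed.

Lemma hn_small x : (forall e : R, 0 < e -> hn x < e) -> x = 0.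
Proof.
move=> h; apply: (hn_eq0 hip); apply/eqP; rewrite eq_le hn_ge0 andbT.
rewrite leNgt; apply/negP => /h; by rewrite ltxx.
Qed.

Lemma hnB x y : hn x - hn y <= hn (x - y).
Proof.
rewrite lerBlDr; have := hnD hip (x - y) y; by rewrite subrK.
Qed.

Lemma hnBC x y : hn (x - y) = hn (y - x).
Proof. by rewrite -(hnN hip) opprB. Qed.

Lemma bounded_le S : bounded_op ip S -> exists M, 0 <= M /\ forall x, hn (S x) <= M * hn x.
Proof.
move=> [_ [M hM]]; exists (Num.max M 0); split; first by rewrite le_max lexx orbT.
move=> x; apply: (le_trans (hM x)); apply: ler_wpM2r; first exact: hn_ge0.
by rewrite le_max lexx.
Qed.

Lemma op_norm_ge0 S : bounded_op ip S -> 0 <= op_norm ip S.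
Proof.
move=> hS; have [M [M0 hM]] := bounded_le hS.
have hub : has_ubound [set hn (S x) | x in [set x : V | hn x <= 1]].
  exists M => _ [x /= hx <-]; apply: (le_trans (hM x)).
  by rewrite -[leRHS]mulr1 ler_wpM2l.
apply: (le_trans _ (ub_le_sup hub _)); last first.
  by exists 0; rewrite /= ?(hn0 hip) ?ler01.
by rewrite (lin0 hS.1) (hn0 hip).
Qed.

Lemma op_norm_le S x : bounded_op ip S -> hn (S x) <= op_norm ip S * hn x.
Proof.
move=> hS; have [M [M0 hM]] := bounded_le hS.
have hub : has_ubound [set hn (S x) | x in [set x : V | hn x <= 1]].
  exists M => _ [y /= hy <-]; apply: (le_trans (hM y)).
  by rewrite -[leRHS]mulr1 ler_wpM2l.
have [x0|xn0] := eqVneq x 0.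
  by rewrite x0 (lin0 hS.1) (hn0 hip) mulr0.
have hxp : 0 < hn x.
  by rewrite lt_neqAle hn_ge0 andbT; apply/eqP => /esym /(hn_eq0 hip) /eqP; rewrite (negbTE xn0).
set z := ((hn x)^-1)%:C%C *: x.
have hz : hn z = 1.
  by rewrite /z (hnZ hip) nc_real ger0_norm ?invr_ge0 ?hn_ge0 // mulVf // gt_eqF.
have h : hn (S z) <= op_norm ip S.
  by apply: (ub_le_sup hub); exists z => //=; rewrite hz.
move: h; rewrite /z (linZ hS.1) (hnZ hip) nc_real.
rewrite ger0_norm ?invr_ge0 ?hn_ge0 // => h.
by rewrite -ler_pdivrMr // mulrC.
Qed.

Lemma op_norm_ub S K : 0 <= K -> (forall x, hn (S x) <= K * hn x) -> op_norm ip S <= K.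
Proof.
move=> K0 hK; apply: ge_sup; first by exists (hn (S 0)), 0 => //=; rewrite (hn0 hip) ler01.
move=> _ [y /= hy <-]; apply: (le_trans (hK y)); by rewrite -[leRHS]mulr1 ler_wpM2l.
Qed.

Variable T : V -> V.
Hypothesis hT : quasinilpotent ip T.
Hypothesis hc : complete_ip ip.

Local Notation Rs := (resolvent ip T).
Local Notation B := (fun l => op_norm ip (resolvent ip T l)).

Lemma T_lin : linear T.
Proof. exact: hT.1.1. Qed.

Lemma shift_lin l : linear (shift_op l T).
Proof.
move=> a u v; rewrite /shift_op (linD T_lin) (linZ T_lin) scalerDr scalerBr !scalerA opprD addrACA.
by rewrite mulrC.
Qed.

Lemma Rs_spec l : l != 0 -> is_inverse_op ip (shift_op l T) (Rs l).
Proof.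
move=> l0; rewrite /resolvent; apply: epsilon_spec.
have : ~ spectrum ip T l by rewrite hT.2 /= => /eqP; rewrite (negbTE l0).
by rewrite /spectrum /= => /contrapT.
Qed.

Lemma Rs_bounded l : l != 0 -> bounded_op ip (Rs l).
Proof. by move=> /Rs_spec []. Qed.

Lemma Rs_lin l : l != 0 -> linear (Rs l).
Proof. by move=> /Rs_bounded []. Qed.

Lemma Rs_left l x : l != 0 -> Rs l (l *: x - T x) = x.
Proof. by move=> /Rs_spec [_ [h _]]; exact: h. Qed.

Lemma Rs_right l x : l != 0 -> l *: Rs l x - T (Rs l x) = x.
Proof. by move=> /Rs_spec [_ [_ h]]; exact: h. Qed.

Lemma B_ge0 l : l != 0 -> 0 <= B l.
Proof. by move=> /Rs_bounded /op_norm_ge0. Qed.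

Lemma RB l y : l != 0 -> hn (Rs l y) <= B l * hn y.
Proof. by move=> /Rs_bounded /op_norm_le. Qed.

Lemma Rs_inj l x : l != 0 -> x != 0 -> Rs l x != 0.
Proof.
move=> l0 x0; apply/eqP => h; move: (Rs_right x l0); rewrite h scaler0 (lin0 T_lin) subr0.
by move/esym/eqP; rewrite (negbTE x0).
Qed.

Lemma local_bound l m : l != 0 -> m != 0 -> nc (m - l) * B l <= 2^-1 -> B m <= 2 * B l.
Proof.
move=> l0 m0 hlm; apply: op_norm_ub; first by rewrite mulr_ge0 ?B_ge0.
move=> y; set x := Rs m y.
have e : x = Rs l (y + (l - m) *: x).
  rewrite -{1}(Rs_left x l0); congr (Rs l _).
  by rewrite -{1}(Rs_right y m0) -/x scalerBl [RHS]addrC addrA subrK.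
have h1 : hn x <= B l * (hn y + nc (l - m) * hn x).
  rewrite {1}e; apply: (le_trans (RB _ l0)); apply: ler_wpM2l; first exact: B_ge0.
  by apply: (le_trans (hnD hip _ _)); rewrite (hnZ hip).
have ncs : nc (l - m) = nc (m - l).
  by rewrite -opprB complex.normcN.
rewrite ncs mulrDr mulrA (mulrC (B l)) in h1.
have h2 : nc (m - l) * B l * hn x <= 2^-1 * hn x by apply: ler_wpM2r => //; exact: hn_ge0.
have := hn_ge0 ip x; have := hn_ge0 ip y; have := B_ge0 l0.
nra.
Qed.
End Ops.

From Stdlib Require Import ClassicalEpsilon.
From mathcomp Require Import all_boot all_order all_algebra complex all_classical all_reals all_analysis.
From mathcomp Require Import ring lra.
Import Order.TTheory GRing.Theory Num.Theory.
Set Implicit Arguments.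
Unset Strict Implicit.
Unset Printing Implicit Defensive.
Local Open Scope ring_scope.

Section Geo.
Variable R : realType.
Lemma geo_pos n : 0 < (2^-1 : R) ^+ n.
Proof. by rewrite exprn_gt0 // invr_gt0 ltr0n. Qed.

Lemma geo_anti (n m : nat) : (n <= m)%N -> (2^-1 : R) ^+ m <= (2^-1) ^+ n.
Proof.
move=> /subnK <-; rewrite exprD; rewrite -[leRHS]mul1r ler_wpM2r ?(ltW (geo_pos _)) //.
by rewrite exprn_ile1 // ?invr_ge0 ?ler0n // invf_le1 ?ler1n // ltr0n.
Qed.

Lemma geo_small (d : R) : 0 < d -> exists N, (2^-1 : R) ^+ N < d.
Proof.
move=> d0; exists (Num.Def.trunc (d^-1)).+1.
have h1 := truncnS_gt (d^-1).
set N := (Num.Def.trunc (d^-1)).+1 in h1 *.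
have h2 : (N%:R : R) < 2 ^+ N by rewrite -natrX ltr_nat ltn_expl.
rewrite exprVn invf_plt ?posrE ?exprn_gt0 ?ltr0n //.
exact: lt_trans h1 h2.
Qed.
End Geo.

Section Blow.
Variable R : realType.
Local Notation C := R[i].
Variable V : lmodType C.
Variable ip : V -> V -> C.
Hypothesis hip : inner_product ip.
Local Notation nc := (complex.ComplexField.Normc.normc).
Local Notation hn := (hnorm ip).
Variable T : V -> V.
Hypothesis hT : quasinilpotent ip T.
Hypothesis hc : complete_ip ip.
Local Notation Rs := (resolvent ip T).
Local Notation B := (fun l => op_norm ip (resolvent ip T l)).

Section Small.
Variable l : C.
Hypothesis l0 : l != 0.
Hypothesis hl : nc l * B l <= 2^-1.

Lemma contr_Rs a b : hn (Rs l (l *: a) - Rs l (l *: b)) <= 2^-1 * hn (a - b).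
Proof.
rewrite -(linB (Rs_lin hT l0)) -scalerBr.
apply: (le_trans (RB hip hT _ l0)); rewrite (hnZ hip) mulrA.
apply: ler_wpM2r; first exact: hn_ge0.
by rewrite mulrC.
Qed.

Lemma negT_inj x : - T x = 0 -> x = 0.
Proof.
move=> h.
have Tx0 : T x = 0 by rewrite -[T x]opprK h oppr0.
have e : x = Rs l (l *: x).
  by rewrite -[in LHS](Rs_left hT x l0) Tx0 subr0.
have := contr_Rs x 0; rewrite -e scaler0 (lin0 (Rs_lin hT l0)) !subr0 => h2.
apply: (hn_eq0 hip); apply/eqP; rewrite eq_le hn_ge0 andbT.
have := hn_ge0 ip x; lra.
Qed.

Lemma negT_surj y : exists x, - T x = y.
Proof.
pose Phi x := Rs l (y + l *: x).
have hPhi a b : hn (Phi a - Phi b) <= 2^-1 * hn (a - b).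
  rewrite /Phi !(linD (Rs_lin hT l0)) opprD addrACA subrr add0r -(linB (Rs_lin hT l0)).
  rewrite (linB (Rs_lin hT l0)); exact: contr_Rs.
pose u n := iter n Phi 0.
have hd n : hn (u n.+1 - u n) <= (2^-1) ^+ n * hn (u 1%N).
  elim: n => [|n IH]; first by rewrite expr0 mul1r subr0.
  rewrite /u !iterS -!/(u _).
  apply: (le_trans (hPhi _ _)); rewrite exprS -mulrA ler_wpM2l //.
have hC n k : hn (u (n + k)%N - u n) <= (2 * (2^-1) ^+ n - 2 * (2^-1) ^+ (n + k)) * hn (u 1%N).
  elim: k => [|k IH]; first by rewrite addn0 subrr (hn0 hip) !subrr mul0r.
  have e : u (n + k.+1)%N - u n = (u (n + k).+1 - u (n + k)%N) + (u (n + k)%N - u n).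
    by rewrite addnS addrA subrK.
  rewrite e; apply: (le_trans (hnD hip _ _)).
  apply: (le_trans (lerD (hd _) IH)).
  rewrite addnS exprS.
  have := hn_ge0 ip (u 1%N); have := geo_pos R (n + k).
  move: ((2^-1 : R) ^+ (n + k)) ((2^-1 : R) ^+ n) (hn (u 1%N)) => p q w hp hw.
  rewrite -mulrDl; apply: ler_wpM2r => //; lra.
have [z hz] : exists z, forall e : R, 0 < e -> exists N, forall n, (N <= n)%N -> hn (u n - z) < e.
  apply: hc => e e0.
  have hw := hn_ge0 ip (u 1%N).
  have [N hN] : exists N, (2^-1 : R) ^+ N < e / (2 * (hn (u 1%N) + 1)).
    by apply: geo_small; rewrite divr_gt0 // mulr_gt0 // ltr_wpDl.
  exists N => m n Nm Nn.
  have key : forall a b, (N <= a)%N -> (a <= b)%N -> hn (u b - u a) < e.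
    move=> a b Na /subnK <-; rewrite addnC.
    apply: (le_lt_trans (hC _ _)).
    have ga := geo_anti R Na; have gp := geo_pos R (a + (b - a)).
    have : (2^-1 : R) ^+ N * (2 * (hn (u 1%N) + 1)) < e.
      by rewrite -ltr_pdivlMr // mulr_gt0 // ltr_wpDl.
    move: ((2^-1 : R) ^+ N) ((2^-1 : R) ^+ a) ((2^-1 : R) ^+ (a + (b - a))) (hn (u 1%N)) ga gp hw.
    move=> g ga' gb w h1 h2 h3 h4.
    nra.
  case: (leqP m n) => mn.
    by rewrite (hnBC hip); apply: key.
  by apply: key => //; apply: ltnW.
have hfix : Phi z = z.
  apply/eqP; rewrite -subr_eq0; apply/eqP; apply: (hn_small hip) => e e0.
  have [N hN] := hz (e / 2) (divr_gt0 e0 (ltr0n _ 2)).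
  have e1 : Phi z - z = (Phi z - Phi (u N)) + (u N.+1 - z).
    by rewrite /u iterS -/(u N) addrA subrK.
  rewrite e1; apply: (le_lt_trans (hnD hip _ _)).
  have h1 := hPhi z (u N); have h2 := hN N (leqnn N); have h3 := hN N.+1 (leqnSn N).
  rewrite (hnBC hip) in h2.
  have := hn_ge0 ip (z - u N); lra.
exists z.
have := Rs_right hT (y + l *: z) l0; rewrite -/(Phi z) hfix => h.
by move: h; rewrite [RHS]addrC => /addrI.
Qed.

Lemma invertible_shift0 : invertible_op ip (shift_op 0 T).
Proof.
have sh0 x : shift_op 0 T x = - T x by rewrite /shift_op scale0r add0r.
pose S y := epsilon (inhabits (0 : V)) (fun x => - T x = y).
have hS y : - T (S y) = y by rewrite /S; apply: (epsilon_spec (inhabits (0:V)) (fun x => - T x = y)); exact: negT_surj.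
have inj a b : - T a = - T b -> a = b.
  move=> e; apply/eqP; rewrite -subr_eq0; apply/eqP; apply: negT_inj.
  by rewrite (linB (T_lin hT)) opprB -[T b]opprK -e opprK subrr.
exists S; split; last first.
  split => x; rewrite sh0; [by apply: inj; rewrite hS | exact: hS].
split.
  move=> a u v; apply: inj.
  by rewrite hS (linD (T_lin hT)) (linZ (T_lin hT)) opprD -scalerN !hS.
exists (2 * B l) => y; set x := S y.
have e : x = Rs l (y + l *: x).
  rewrite -[in LHS](Rs_left hT x l0); congr (Rs l _).
  by rewrite -(hS y) -/x addrC.
have h1 : hn x <= B l * (hn y + nc l * hn x).
  rewrite {1}e; apply: (le_trans (RB hip hT _ l0)); apply: ler_wpM2l; first exact: (B_ge0 hip hT l0).
  by apply: (le_trans (hnD hip _ _)); rewrite (hnZ hip).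
have h2 : nc l * B l * hn x <= 2^-1 * hn x by apply: ler_wpM2r => //; exact: hn_ge0.
have := hn_ge0 ip x; have := hn_ge0 ip y; have := B_ge0 hip hT l0.
rewrite mulrDr mulrA (mulrC (B l)) in h1.
nra.
Qed.
End Small.

Lemma nc_gt0 (l : C) : 0 < nc l -> l != 0.
Proof. by move=> h; apply/eqP => l0; move: h; rewrite l0 complex.ComplexField.Normc.normc0 ltxx. Qed.

Lemma blowup K : exists r : R, 0 < r /\ forall l, 0 < nc l < r -> K < B l.
Proof.
apply: contrapT => hneg.
set Kp := Num.max K 1.
have Kp1 : 1 <= Kp by rewrite le_max lexx orbT.
have KKp : K <= Kp by rewrite le_max lexx.
have Kp0 : 0 < Kp by apply: lt_le_trans Kp1.
clearbody Kp.
have [l [/andP [hl1 hl2] hB]] : exists l, 0 < nc l < (2 * Kp)^-1 /\ B l <= K.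
  apply: contrapT => nol; apply: hneg; exists ((2 * Kp)^-1); split.
    by rewrite invr_gt0 mulr_gt0.
  move=> l hl; rewrite ltNge; apply/negP => hB; apply: nol; by exists l.
have l0 := nc_gt0 hl1.
have hl : nc l * B l <= 2^-1.
  have b0 := B_ge0 hip hT l0.
  have : nc l * (2 * Kp) < 1 by rewrite -ltr_pdivlMr ?mulr_gt0 // div1r.
  have := le_trans hB KKp.
  move: (nc l) (B l) hl1 b0 => a b ha hb h1 h2.
  nra.
have := invertible_shift0 l0 hl.
have : spectrum ip T 0 by rewrite hT.2.
by [].
Qed.
End Blow.

From Stdlib Require Import ClassicalEpsilon.
From mathcomp Require Import all_boot all_order all_algebra complex all_classical all_reals all_analysis.
From mathcomp Require Import ring lra.
Import Order.TTheory GRing.Theory Num.Theory.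
Import numFieldNormedType.Exports.
Set Implicit Arguments.
Unset Strict Implicit.
Unset Printing Implicit Defensive.
Local Open Scope ring_scope.

Section Seq.
Variable R : realType.
Lemma cvg_eps (u : R^nat) : cvgn u -> forall e : R, 0 < e ->
  exists N, forall n, (N <= n)%N -> `|limn u - u n| < e.
Proof.
move=> /cvgrPdist_lt h e e0.
have [N _ hN] := h e e0.
by exists N => n /hN.
Qed.

Lemma incr_ge (g : nat -> nat) : increasing_seq g -> forall n, (n <= g n)%N.
Proof.
move=> hg; elim=> [|n IH] //.
have : (g n < g n.+1)%N.
  rewrite ltnNge; apply/negP => h.
  have : (g n.+1 <= g n)%O by [].
  by rewrite hg ltnn.
exact: leq_ltn_trans.
Qed.

Lemma Re_le_nc (z : R[i]) : `|complex.Re z| <= complex.ComplexField.Normc.normc z.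
Proof.
case: z => a b /=; rewrite -sqrtr_sqr ler_sqrt ?addr_ge0 ?sqr_ge0 //.
by rewrite lerDl sqr_ge0.
Qed.

Lemma nc_le_ReIm (z : R[i]) :
  complex.ComplexField.Normc.normc z <= `|complex.Re z| + `|complex.Im z|.
Proof.
case: z => a b /=.
rewrite -(ger0_norm (addr_ge0 (normr_ge0 a) (normr_ge0 b))) -sqrtr_sqr.
rewrite ler_sqrt ?sqr_ge0 // sqrrD !real_normK ?num_real //.
have := mulr_ge0 (normr_ge0 a) (normr_ge0 b); lra.
Qed.

Lemma nc_diff (z w : R[i]) : complex.ComplexField.Normc.normc (z - w) <=
  `|complex.Re z - complex.Re w| + `|complex.Im z - complex.Im w|.
Proof. case: z => x y; case: w => u v; exact: (nc_le_ReIm ((x - u) +i* (y - v))%C). Qed.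
End Seq.

Section Ann.
Variable R : realType.
Local Notation C := R[i].
Variable V : lmodType C.
Variable ip : V -> V -> C.
Hypothesis hip : inner_product ip.
Local Notation nc := (complex.ComplexField.Normc.normc).
Local Notation hn := (hnorm ip).
Variable T : V -> V.
Hypothesis hT : quasinilpotent ip T.
Hypothesis hc : complete_ip ip.
Local Notation Rs := (resolvent ip T).
Local Notation B := (fun l => op_norm ip (resolvent ip T l)).

Lemma annulus_bound (rho : R) : 0 < rho ->
  exists M : R, 1 <= M /\ forall l, rho <= nc l <= 1 -> B l <= M.
Proof.
move=> rho0; apply: contrapT => hneg.
have hs : forall n : nat, exists l, (rho <= nc l <= 1) /\ n%:R < B l.
  move=> n; apply: contrapT => nol; apply: hneg; exists (Num.max n%:R 1); split.
    by rewrite le_max lexx orbT.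
  move=> l hl; rewrite leNgt; apply/negP => hB; apply: nol; exists l; split => //.
  by apply: le_lt_trans hB; rewrite le_max lexx.
have [lam hlam] := choice hs.
have rho1 : rho <= 1 by case: (hlam 0%N) => /andP [h1 h2] _; exact: le_trans h2.
pose re := fun n => complex.Re (lam n).
have bre : bounded_fun re.
  exists 1; split => // x x1 n _ /=.
  apply: (le_trans (Re_le_nc _)); case: (hlam n) => /andP [_ h] _.
  exact: le_trans h (ltW x1).
have [f hf cf] := bolzano_weierstrass bre.
pose im := fun n => complex.Im (lam (f n)).
have bim : bounded_fun im.
  exists 1; split => // x x1 n _ /=.
  have e : complex.Im (lam (f n)) = complex.Re (lam (f n) * (- 'i%C)).
    by case: (lam (f n)) => u v /=; rewrite oppr0 mulr0 mulrN1 opprK add0r.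
  rewrite /im e; apply: (le_trans (Re_le_nc _)).
  rewrite complex.ComplexField.Normc.normcM.
  have -> : complex.ComplexField.Normc.normc (- 'i%C : C) = 1.
    by rewrite /= oppr0 expr0n /= add0r sqrrN expr1n sqrtr1.
  rewrite mulr1; case: (hlam (f n)) => /andP [_ h] _.
  exact: le_trans h (ltW x1).
have [g hg cg] := bolzano_weierstrass bim.
set a := limn (re \o f) in cf.
set b := limn (im \o g) in cg.
pose p : C := (a +i* b)%C.
set beta := B p.
pose E := 1 + `|beta|.
have E1 : 1 <= E by rewrite lerDl normr_ge0.
have E0 : 0 < E by apply: lt_le_trans E1.
pose eps := rho / (8 * E).
have eps0 : 0 < eps by rewrite divr_gt0 // mulr_gt0.
have [N1 h1] := cvg_eps cf eps0.
have [N2 h2] := cvg_eps cg eps0.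
pose n := maxn (maxn N1 N2) (Num.Def.trunc (2 * `|beta|)).+1.
have gn := incr_ge hg n.
have fgn := incr_ge hf (g n).
set k := f (g n) in fgn.
set z := lam k.
have dRe : `|complex.Re z - a| < eps.
  rewrite distrC; apply: h1; apply: leq_trans gn.
  by rewrite /n leq_max; apply/orP; left; rewrite leq_max leqnn.
have dIm : `|complex.Im z - b| < eps.
  rewrite distrC; apply: h2.
  by rewrite /n leq_max; apply/orP; left; rewrite leq_max leqnn orbT.
have dz : nc (z - p) <= 2 * eps.
  apply: (le_trans (nc_diff z p)); rewrite /= mulr2n mulrDl mul1r.
  by apply: lerD; apply: ltW.
have [/andP [hz1 hz2] hzB] := hlam k.
have eps4 : 2 * eps <= rho / 4.
  rewrite /eps mulrA [2 * rho]mulrC -mulrA ler_pM2l //.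
  rewrite ler_pdivrMr ?mulr_gt0 //; lra.
have hp : 0 < nc p.
  have tri : nc z <= nc p + nc (z - p).
    by rewrite -{1}(subrKC p z); exact: complex.le_normcD.
  lra.
have p0 := nc_gt0 hp.
have z0 : z != 0 by apply: nc_gt0; exact: lt_le_trans hz1.
have hloc : nc (z - p) * beta <= 2^-1.
  have b1 : beta <= E by rewrite /E; apply: (le_trans (ler_norm _)); rewrite lerDr.
  have b0 : 0 <= beta := B_ge0 hip hT p0.
  have dz2 : nc (z - p) * E <= 2^-1.
    apply: (le_trans (ler_wpM2r (ltW E0) dz)).
    have e : eps * E = rho / 8 by rewrite /eps; field; rewrite gt_eqF.
    rewrite -mulrA e.
    lra.
  apply: le_trans dz2; apply: ler_wpM2l => //; exact: nc_ge0.
have hBz := local_bound hip hT p0 z0 hloc.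
have ht := truncnS_gt (2 * `|beta|).
have hn1 : ((Num.Def.trunc (2 * `|beta|)).+1 <= k)%N.
  apply: (leq_trans _ fgn); apply: (leq_trans _ gn); by rewrite /n leq_max leqnn orbT.
have hn2 : ((Num.Def.trunc (2 * `|beta|)).+1%:R : R) <= k%:R by rewrite ler_nat.
have : 2 * beta <= 2 * `|beta| by rewrite ler_pM2l // ler_norm.
rewrite -/z in hzB; rewrite -/beta in hBz; lra.
Qed.
End Ann.

From Stdlib Require Import ClassicalEpsilon.
From mathcomp Require Import all_boot all_order all_algebra complex all_classical all_reals all_analysis.
From mathcomp Require Import ring lra.
Import Order.TTheory GRing.Theory Num.Theory.
Import numFieldNormedType.Exports.
Set Implicit Arguments.
Unset Strict Implicit.
Unset Printing Implicit Defensive.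
Local Open Scope ring_scope.
Local Open Scope classical_set_scope.

Section KX.
Variable R : realType.
Local Notation C := R[i].
Local Notation nc := (complex.ComplexField.Normc.normc).
Variable q : C -> R.

Definition KX : \bar R :=
  ereal_inf [set ereal_sup [set (q l)%:E | l in [set l : C | 0 < nc l < r]]
            | r in [set r : R | 0 < r]].

Lemma Kup (s : R) : (forall e : R, 0 < e -> exists r : R, 0 < r /\ forall l, 0 < nc l < r -> q l <= s + e) ->
  (KX <= s%:E)%E.
Proof.
move=> h; apply/lee_addgt0Pr => e e0.
have [r [r0 hr]] := h e e0.
apply: (@le_trans _ _ (ereal_sup [set (q l)%:E | l in [set l : C | 0 < nc l < r]])).
  by apply: ereal_inf_lbound; exists r.
apply: ge_ereal_sup => _ [l hl <-]; rewrite -EFinD lee_fin; exact: hr.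
Qed.

Lemma Klow (s : R) : (forall e : R, 0 < e -> forall r : R, 0 < r -> exists l, 0 < nc l < r /\ s - e <= q l) ->
  (s%:E <= KX)%E.
Proof.
move=> h; apply: le_ereal_inf_tmp => _ [r r0 <-].
apply/lee_subgt0Pr => e e0.
have [l [hl hq]] := h e e0 r r0.
apply: (@le_trans _ _ (q l)%:E); first by rewrite -EFinB lee_fin.
by apply: ereal_sup_ubound; exists l.
Qed.

Lemma Kuse_up (t : R) : (KX < t%:E)%E -> exists r : R, 0 < r /\ forall l, 0 < nc l < r -> q l < t.
Proof.
move=> /ereal_inf_lt [_ [r r0 <-] hr]; exists r; split => // l hl.
rewrite -lte_fin; apply: le_lt_trans hr.
by apply: ereal_sup_ubound; exists l.
Qed.

Lemma Kuse_low (t : R) : (t%:E < KX)%E -> forall r : R, 0 < r -> exists l, 0 < nc l < r /\ t < q l.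
Proof.
move=> h r r0.
have : (t%:E < ereal_sup [set (q l)%:E | l in [set l : C | (0 < nc l < r)%R]])%E.
  by apply: lt_le_trans h _; apply: ereal_inf_lbound; exists r.
move=> /ereal_sup_gt [_ [l hl <-] hlt]; exists l; split => //.
Qed.
End KX.

From Stdlib Require Import ClassicalEpsilon.
From mathcomp Require Import all_boot all_order all_algebra complex all_classical all_reals all_analysis.
From mathcomp Require Import ring lra.
Import Order.TTheory GRing.Theory Num.Theory.
Import numFieldNormedType.Exports.
Set Implicit Arguments.
Unset Strict Implicit.
Unset Printing Implicit Defensive.
Local Open Scope ring_scope.
Local Open Scope classical_set_scope.

Section Real.
Variable R : realType.
Lemma ln_le (a b : R) : 0 < a -> a <= b -> ln a <= ln b.
Proof. by move=> a0 ab; rewrite ler_ln ?posrE //; apply: lt_le_trans ab. Qed.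
Lemma ln_lt (a b : R) : 0 < a -> a < b -> ln a < ln b.
Proof. by move=> a0 ab; rewrite ltr_ln ?posrE //; apply: lt_trans ab. Qed.
Lemma le_of_eps (u v : R) : (forall e, 0 < e -> u < v + e) -> u <= v.
Proof.
move=> h; rewrite leNgt; apply/negP => vu.
by have := h (u - v); rewrite subr_gt0 => /(_ vu); rewrite addrC subrK ltxx.
Qed.
Lemma q_lt (f L t : R) : 0 < f -> 0 < L -> ln f / L < t -> f < expR (t * L).
Proof.
move=> f0 L0; rewrite ltr_pdivrMr // => h.
by rewrite -[f]lnK ?posrE // ltr_expR.
Qed.
Lemma q_gt (f L t : R) : 0 < L -> t < ln f / L -> t * L < ln f.
Proof. by move=> L0; rewrite ltr_pdivlMr. Qed.
Lemma q_ge (f L t : R) : 0 < L -> t * L <= ln f -> t <= ln f / L.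
Proof. by move=> L0; rewrite ler_pdivlMr. Qed.
Lemma q_le (f L t : R) : 0 < L -> ln f <= t * L -> ln f / L <= t.
Proof. by move=> L0; rewrite ler_pdivrMr. Qed.
End Real.

Section Main.
Variable R : realType.
Local Notation C := R[i].
Variable V : lmodType C.
Variable ip : V -> V -> C.
Hypothesis hip : inner_product ip.
Local Notation nc := (complex.ComplexField.Normc.normc).
Local Notation hn := (hnorm ip).
Variable T : V -> V.
Hypothesis hT : quasinilpotent ip T.
Hypothesis hc : complete_ip ip.
Local Notation Rs := (resolvent ip T).
Local Notation B := (fun l => op_norm ip (resolvent ip T l)).
Local Notation Q := (power_quotient ip T).

Lemma kxE x : k_x ip T x = KX (Q x).
Proof. by []. Qed.

Lemma BL (c : R) : exists r : R, 0 < r /\ forall l, 0 < nc l < r -> 1 < B l /\ c < ln (B l).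
Proof.
have [r [r0 hr]] := blowup hip hT hc (Num.max 1 (expR c)).
exists r; split => // l hl; have := hr l hl; rewrite gt_max => /andP [h1 h2]; split => //.
by rewrite -[X in X < _](expRK c); apply: ln_lt => //; exact: expR_gt0.
Qed.

Lemma f_pos l x : 0 < nc l -> x != 0 -> 0 < hn (Rs l x).
Proof.
move=> /nc_gt0 l0 x0; rewrite lt_neqAle hn_ge0 andbT eq_sym.
by apply/eqP => /(hn_eq0 hip) /eqP; rewrite (negbTE (Rs_inj hT l0 x0)).
Qed.

Lemma k_le1 x : x != 0 -> (k_x ip T x <= 1%:E)%E.
Proof.
move=> x0; rewrite kxE; apply: Kup => e e0.
have [r [r0 hr]] := BL (`|ln (hn x)| / e).
exists r; split => // l hl; have [B1 hB] := hr l hl.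
have l0 : l != 0 by apply: nc_gt0; case/andP: hl.
have L0 : 0 < ln (B l) by apply: ln_gt0.
have fp := f_pos (proj1 (andP hl)) x0.
have xp : 0 < hn x by rewrite lt_neqAle hn_ge0 andbT eq_sym; apply/eqP => /(hn_eq0 hip) /eqP; rewrite (negbTE x0).
apply: q_le => //.
have h1 : ln (hn (Rs l x)) <= ln (B l) + ln (hn x).
  rewrite -lnM ?posrE //; last by apply: lt_trans B1.
  apply: ln_le => //; exact: (RB hip hT x l0).
have h2 : `|ln (hn x)| <= e * ln (B l) by rewrite -ler_pdivrMl // mulrC; exact: ltW.
have := ler_norm (ln (hn x)); rewrite /power_quotient; lra.
Qed.

Section Constr.
Variable s : R.
Hypothesis hs1 : s <= 1.
Variable y : nat -> R.
Variable xs : nat -> V.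
Hypothesis hy_inc : forall n, y n < y n.+1.
Hypothesis hy_lt : forall n, y n < s.
Hypothesis hy_gt : forall n, s - (2^-1) ^+ n < y n.
Hypothesis hx0 : forall n, xs n != 0.
Hypothesis hkx : forall n, k_x ip T (xs n) = (y n)%:E.

Local Notation g n := ((2^-1 : R) ^+ n).

Definition rstar : R := proj1_sig (cid (BL 0)).
Lemma rstarP : 0 < rstar /\ forall l, 0 < nc l < rstar -> 1 < B l /\ 0 < ln (B l).
Proof. exact: proj2_sig (cid (BL 0)). Qed.

Lemma hk_lt j : (KX (Q (xs j)) < s%:E)%E.
Proof. by rewrite -kxE hkx lte_fin. Qed.

Definition rad j : R := proj1_sig (cid (Kuse_up (hk_lt j))).
Lemma radP j : 0 < rad j /\ forall l, 0 < nc l < rad j -> Q (xs j) l < s.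
Proof. exact: proj2_sig (cid (Kuse_up (hk_lt j))). Qed.

Fixpoint rho n : R := match n with
  | 0 => Num.min 1 rstar
  | n'.+1 => Num.min (Num.min (rho n') (g n)) (rad n') end.

Lemma rho_pos n : 0 < rho n.
Proof.
elim: n => [|n IH] /=; first by rewrite lt_min ltr01 (proj1 rstarP).
by rewrite !lt_min IH (proj1 (radP n)) geo_pos.
Qed.

Lemma rho_dec n : rho n.+1 <= rho n.
Proof. by rewrite /= !ge_min lexx. Qed.

Lemma rho_anti n m : (n <= m)%N -> rho m <= rho n.
Proof.
move=> /subnK <-; elim: (m - n)%N => [|k IH] //=.
exact: le_trans (rho_dec _) IH.
Qed.

Lemma rho_g n : rho n <= g n.
Proof. case: n => [|n] /=; first by rewrite expr0 ge_min lexx. by rewrite !ge_min lexx orbT. Qed.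

Lemma rho_rstar n : rho n <= rstar.
Proof. apply: le_trans (rho_anti (leq0n n)) _; by rewrite /= ge_min lexx orbT. Qed.

Lemma rho_le1 n : rho n <= 1.
Proof. apply: le_trans (rho_anti (leq0n n)) _; by rewrite /= ge_min lexx. Qed.

Lemma rho_rad j n : (j < n)%N -> rho n <= rad j.
Proof. move=> jn; apply: le_trans (rho_anti jn) _; by rewrite /= ge_min lexx orbT. Qed.

Definition Mb n : R := proj1_sig (cid (annulus_bound hip hT (rho_pos n.+1))).
Lemma MbP n : 1 <= Mb n /\ forall l, rho n.+1 <= nc l <= 1 -> B l <= Mb n.
Proof. exact: proj2_sig (cid (annulus_bound hip hT (rho_pos n.+1))). Qed.

Definition theta n : R := expR ((s - 1) * ln (Mb n)).
Definition E (w : R) (l : C) : R := expR (w * ln (B l)).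
Definition yprev m : R := if m is m'.+1 then y m' else y 0%N - 1.
Definition wm m : R := (yprev m + y m) / 2.
Definition w2 m : R := (wm m + y m) / 2.
Definition coef m (P : R) : R := Num.min (g m.+1) (g m.+1 * P / hn (xs m)).

Definition Cond m (S : V) (a : R) (l : C) : Prop :=
  [/\ 0 < nc l < g m, nc l < rstar, hn (Rs l S) <= E (wm m) l,
      w2 m * ln (B l) < ln (hn (Rs l (xs m))) &
      (ln (4 / a) <= (w2 m - wm m) * ln (B l) /\ - ln (a / 2) <= g m * ln (B l))].

Definition pick m S a : C := epsilon (inhabits 0) (Cond m S a).
Definition phi m (a : R) (l : C) : R := a / 4 * expR ((w2 m - 1) * ln (B l)).

Definition step m (st : V * R) : V * R :=
  let P' := Num.min st.2 (theta m) in
  let a := coef m P' in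
  let l := pick m st.1 a in
  (st.1 + (a%:C)%C *: xs m, Num.min P' (phi m a l)).

Fixpoint state m : V * R := match m with
  | 0 => (0, 1)
  | m'.+1 => step m' (state m') end.

Definition S m := (state m).1.
Definition Ph m := (state m).2.
Definition Ph' m := Num.min (Ph m) (theta m).
Definition a m := coef m (Ph' m).
Definition lam m := pick m (S m) (a m).

Lemma S_succ m : S m.+1 = S m + ((a m)%:C)%C *: xs m.
Proof. by []. Qed.
Lemma Ph_succ m : Ph m.+1 = Num.min (Ph' m) (phi m (a m) (lam m)).
Proof. by []. Qed.

Lemma hxs_pos j : 0 < hn (xs j).
Proof. by rewrite lt_neqAle hn_ge0 andbT eq_sym; apply/eqP => /(hn_eq0 hip) /eqP; rewrite (negbTE (hx0 j)). Qed.

Lemma theta_pos n : 0 < theta n.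
Proof. exact: expR_gt0. Qed.

Lemma Ph_pos m : 0 < Ph m /\ Ph m <= 1.
Proof.
elim: m => [|m [IH1 IH2]]; first by rewrite /Ph /= ltr01 lexx.
rewrite Ph_succ /Ph' /phi /a /coef; split.
  rewrite !lt_min IH1 theta_pos /= mulr_gt0 ?expR_gt0 // divr_gt0 //.
  by rewrite lt_min geo_pos divr_gt0 ?mulr_gt0 ?geo_pos ?lt_min ?IH1 ?theta_pos ?hxs_pos.
by rewrite !ge_min IH2.
Qed.

Lemma Ph'_pos m : 0 < Ph' m.
Proof. by rewrite /Ph' lt_min (proj1 (Ph_pos m)) theta_pos. Qed.
Lemma Ph'_le1 m : Ph' m <= 1.
Proof. by rewrite /Ph' ge_min (proj2 (Ph_pos m)). Qed.
Lemma Ph'_theta m : Ph' m <= theta m.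
Proof. by rewrite /Ph' ge_min lexx orbT. Qed.
Lemma Ph'_dec m : Ph' m.+1 <= Ph' m.
Proof. by rewrite /Ph' ge_min Ph_succ ge_min lexx. Qed.
Lemma Ph'_phi m : Ph' m.+1 <= phi m (a m) (lam m).
Proof. by rewrite /Ph' ge_min Ph_succ ge_min lexx orbT. Qed.
Lemma Ph'_anti n m : (n <= m)%N -> Ph' m <= Ph' n.
Proof.
move=> /subnK <-; elim: (m - n)%N => [|k IH]; first by rewrite add0n.
rewrite addSn; exact: le_trans (Ph'_dec _) IH.
Qed.

Lemma a_pos m : 0 < a m.
Proof. by rewrite /a /coef lt_min geo_pos divr_gt0 ?mulr_gt0 ?geo_pos ?Ph'_pos ?hxs_pos. Qed.
Lemma a_le m : a m <= g m.+1.
Proof. by rewrite /a /coef ge_min lexx. Qed.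
Lemma a_xs m : a m * hn (xs m) <= g m.+1 * Ph' m.
Proof.
by rewrite -ler_pdivlMr ?hxs_pos // /a /coef ge_min lexx orbT.
Qed.

Lemma hn_real_scale (c : R) (v : V) : 0 <= c -> hn ((c%:C)%C *: v) = c * hn v.
Proof. by move=> c0; rewrite (hnZ hip) nc_real ger0_norm. Qed.

Lemma g_succ n : g n.+1 = g n / 2.
Proof. by rewrite exprSr. Qed.

Lemma S_diff n k : hn (S (k + n) - S n) <= Ph' n * (g n - g (k + n)).
Proof.
elim: k => [|k IH]; first by rewrite add0n subrr (hn0 hip) subrr mulr0.
rewrite addSn S_succ addrAC.
apply: (le_trans (hnD hip _ _)); rewrite hn_real_scale ?(ltW (a_pos _)) //.
have h1 := a_xs (k + n); have h2 := Ph'_anti (leq_addl k n).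
have h3 := geo_pos R (k + n).+1; have h4 := Ph'_pos n.
rewrite g_succ in h1 h3 *.
move: (Ph' (k + n)) (Ph' n) (g (k + n)) (a (k + n) * hn (xs (k + n))) IH h1 h2 h3 h4 => p q gg u.
move=> h0 h1 h2 h3 h4.
nra.
Qed.

Lemma S_cauchy n m : (n <= m)%N -> hn (S m - S n) <= g n.
Proof.
move=> /subnK <-; apply: (le_trans (S_diff _ _)).
have := Ph'_le1 n; have := Ph'_pos n; have := geo_pos R (m - n + n); have := geo_pos R n.
move: (Ph' n) (g n) (g (m - n + n)) => p u v; nra.
Qed.

Lemma x_exists : exists l : V, forall e : R, 0 < e -> exists N : nat, forall n : nat,
        (N <= n)%N -> hn (S n - l) < e.
Proof.
apply: hc => e e0; have [N hN] := geo_small e0.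
exists N => m n Nm Nn.
case: (leqP m n) => mn.
  rewrite (hnBC hip); apply: le_lt_trans (S_cauchy mn) _.
  exact: le_lt_trans (geo_anti R Nm) hN.
apply: le_lt_trans (S_cauchy (ltnW mn)) _.
exact: le_lt_trans (geo_anti R Nn) hN.
Qed.

Definition xl : V := proj1_sig (cid x_exists).
Lemma xlP : forall e : R, 0 < e -> exists N : nat, forall n : nat, (N <= n)%N -> hn (S n - xl) < e.
Proof. exact: proj2_sig (cid x_exists). Qed.

Lemma x_tail n : hn (xl - S n) <= Ph' n * g n.
Proof.
apply: le_of_eps => e e0.
have [N hN] := xlP e0.
set m := maxn N n.
have e1 : xl - S n = (xl - S m) + (S m - S n) by rewrite addrA subrK.
rewrite e1; apply: (le_lt_trans (hnD hip _ _)).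
have h1 := hN m (leq_maxl N n); rewrite (hnBC hip) in h1.
have h2 : hn (S m - S n) <= Ph' n * (g n - g m).
  by have := S_diff n (m - n); rewrite subnK // leq_maxr.
have := geo_pos R m; have := Ph'_pos n.
move: (Ph' n) (g m) (g n) h1 h2 => p u v h1 h2 h3 h4.
nra.
Qed.

Lemma x_tail1 n : hn (xl - S n) <= Ph' n.
Proof.
apply: (le_trans (x_tail n)); rewrite -[leRHS]mulr1 ler_wpM2l ?(ltW (Ph'_pos n)) //.
by rewrite exprn_ile1 // ?invr_ge0 ?ler0n // invf_le1 ?ler1n.
Qed.

Lemma Rs_add l u v : 0 < nc l -> hn (Rs l (u + v)) <= hn (Rs l u) + hn (Rs l v).
Proof. move=> /nc_gt0 l0; rewrite (linD (Rs_lin hT l0)); exact: hnD. Qed.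

Lemma Rs_scale l (c : R) v : 0 < nc l -> 0 <= c -> hn (Rs l ((c%:C)%C *: v)) = c * hn (Rs l v).
Proof. move=> /nc_gt0 l0 c0; rewrite (linZ (Rs_lin hT l0)); exact: hn_real_scale. Qed.

Lemma Rs_zero l : 0 < nc l -> hn (Rs l 0) = 0.
Proof. by move=> /nc_gt0 l0; rewrite (lin0 (Rs_lin hT l0)) (hn0 hip). Qed.

Lemma E_pos w l : 0 < E w l.
Proof. exact: expR_gt0. Qed.

Lemma step_bound m w l : 0 < nc l < rstar -> Q (xs m) l < w ->
  hn (Rs l (S m)) <= (1 - g m) * E w l -> hn (Rs l (S m.+1)) <= (1 - g m.+1) * E w l.
Proof.
move=> /andP [l1 l2] hq hS.
have [_ L0] := (proj2 rstarP) l (introT andP (conj l1 l2)).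
have f0 := f_pos l1 (hx0 m).
have hf : hn (Rs l (xs m)) < E w l by apply: q_lt.
rewrite S_succ; apply: (le_trans (Rs_add _ _ l1)).
rewrite Rs_scale // ?(ltW (a_pos _)) //.
have ha := a_le m; have ap := a_pos m; have Ep := E_pos w l.
rewrite g_succ in ha *.
have gp := geo_pos R m.
nra.
Qed.

Lemma Pinv m : forall w, yprev m < w -> exists r : R, 0 < r /\
  forall l, 0 < nc l < r -> hn (Rs l (S m)) <= (1 - g m) * E w l.
Proof.
elim: m => [|m IH] w hw.
  exists 1; split => // l /andP [l1 _]; rewrite /S /= Rs_zero // expr0 subrr mul0r lexx //.
have ym : yprev m < y m by case: m {IH hw} => [|m] /=; [lra | exact: hy_inc].
have [r1 [r10 h1]] := IH w (lt_trans ym hw).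
have hk : (KX (Q (xs m)) < w%:E)%E by rewrite -kxE hkx lte_fin.
have [r2 [r20 h2]] := Kuse_up hk.
have rs0 := proj1 rstarP.
exists (Num.min (Num.min r1 r2) rstar); split; first by rewrite !lt_min r10 r20.
move=> l /andP [l1]; rewrite !lt_min => /andP [/andP [lr1 lr2] lr3].
apply: step_bound; first by rewrite l1.
  by apply: h2; rewrite l1.
by apply: h1; rewrite l1.
Qed.

Lemma Uinv n l : 0 < nc l < rho n -> hn (Rs l (S n)) <= (1 - g n) * E s l.
Proof.
elim: n l => [|n IH] l /andP [l1 l2].
  by rewrite /S /= Rs_zero // expr0 subrr mul0r.
apply: step_bound.
- by rewrite l1 /=; apply: lt_le_trans l2 (rho_rstar _).
- by apply: (proj2 (radP n)); rewrite l1; apply: lt_le_trans l2 (rho_rad (ltnSn n)).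
- by apply: IH; rewrite l1; apply: lt_le_trans l2 (rho_dec _).
Qed.

Lemma yprev_lt m : yprev m < y m.
Proof. by case: m => [|m] /=; [lra | exact: hy_inc]. Qed.

Lemma wm_gt m : yprev m < wm m.
Proof. have := yprev_lt m; rewrite /wm; lra. Qed.
Lemma w2_gt m : wm m < w2 m.
Proof. have := yprev_lt m; rewrite /w2 /wm; lra. Qed.
Lemma w2_lt m : w2 m < y m.
Proof. have := yprev_lt m; rewrite /w2 /wm; lra. Qed.

Lemma cond_exists m : exists l, Cond m (S m) (a m) l.
Proof.
have [r1 [r10 h1]] := Pinv (wm_gt m).
have d0 : 0 < w2 m - wm m by rewrite subr_gt0 w2_gt.
have gp := geo_pos R m; have ap := a_pos m.
have [r2 [r20 h2]] := BL (Num.max (ln (4 / a m) / (w2 m - wm m)) (- ln (a m / 2) / g m)).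
have rs0 := proj1 rstarP.
have hk : ((w2 m)%:E < KX (Q (xs m)))%E by rewrite -kxE hkx lte_fin w2_lt.
have r0 : 0 < Num.min (Num.min (Num.min r1 r2) (g m)) rstar by rewrite !lt_min r10 r20 gp rs0.
have [l [/andP [l1 lr] hq]] := Kuse_low hk r0.
move: lr; rewrite !lt_min => /andP [/andP [/andP [lr1 lr2] lr3] lr4].
have [B1 hc1] := h2 l (introT andP (conj l1 lr2)).
rewrite gt_max in hc1; case/andP: hc1 => hc1 hc2.
have L0 : 0 < ln (B l) by apply: ln_gt0.
exists l; split.
- by rewrite l1 lr3.
- exact: lr4.
- apply: (le_trans (h1 l (introT andP (conj l1 lr1)))).
  rewrite -[leRHS]mul1r ler_wpM2r ?(ltW (E_pos _ _)) //; have := geo_pos R m; lra.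
- exact: q_gt.
- split.
    by rewrite -ler_pdivrMl // mulrC; apply: ltW.
  by rewrite -ler_pdivrMl // mulrC; apply: ltW.
Qed.

Lemma lamP m : Cond m (S m) (a m) (lam m).
Proof. by rewrite /lam /pick; apply: epsilon_spec; exact: cond_exists. Qed.

Lemma Rs_sub_le l u v : 0 < nc l -> hn (Rs l u) <= hn (Rs l v) + op_norm ip (Rs l) * hn (u - v).
Proof.
move=> l1; have l0 := nc_gt0 l1.
have e : u = v + (u - v) by rewrite addrC subrK.
rewrite {1}e; apply: (le_trans (Rs_add _ _ l1)); rewrite lerD2l.
exact: (RB hip hT _ l0).
Qed.

Lemma lower m : [/\ w2 m - g m <= Q xl (lam m), 0 < nc (lam m) < g m & 0 < hn (Rs (lam m) xl)].
Proof.
have [hl1 hl2 hl3 hl4 [hl5 hl6]] := lamP m.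
set l := lam m in hl1 hl2 hl3 hl4 hl5 hl6 *.
suff : w2 m - g m <= Q xl l /\ 0 < hn (Rs l xl) by case.
have l1 : 0 < nc l by case/andP: hl1.
have [B1 L0] := (proj2 rstarP) l (introT andP (conj l1 hl2)).
set L := ln (B l) in hl3 hl4 hl5 hl6 L0 *.
have BL' : B l = expR L by rewrite /L lnK // posrE; apply: lt_trans B1.
have ap := a_pos m.
have fxm := f_pos l1 (hx0 m).
have hfx : expR (w2 m * L) < hn (Rs l (xs m)) by rewrite -[X in _ < X]lnK ?posrE // ltr_expR.
have hEw : E (wm m) l * (4 / a m) <= E (w2 m) l.
  have : 4 / a m <= expR ((w2 m - wm m) * L).
    by rewrite -[X in X <= _]lnK ?posrE ?divr_gt0 // ler_expR.
  move=> h; apply: (le_trans (ler_wpM2l (ltW (E_pos _ _)) h)).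
  by rewrite /E -expRD -mulrDl addrC subrK.
have hS1 : a m * hn (Rs l (xs m)) <= hn (Rs l (S m.+1)) + hn (Rs l (S m)).
  rewrite -Rs_scale ?(ltW ap) //.
  have e : ((a m)%:C)%C *: xs m = S m.+1 + - S m by rewrite S_succ addrAC subrr add0r.
  rewrite e; apply: (le_trans (Rs_add _ _ l1)).
  by rewrite (linN (Rs_lin hT (nc_gt0 l1))) (hnN hip).
have htail : op_norm ip (Rs l) * hn (xl - S m.+1) <= a m / 4 * E (w2 m) l.
  apply: (le_trans (ler_wpM2l (B_ge0 hip hT (nc_gt0 l1)) (x_tail1 m.+1))).
  apply: (le_trans (ler_wpM2l (B_ge0 hip hT (nc_gt0 l1)) (Ph'_phi m))).
  rewrite /phi -/l -/L BL' /E mulrCA -expRD.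
  by rewrite -{1}[L]mul1r -mulrDl addrC subrK.
have hx : hn (Rs l (S m.+1)) <= hn (Rs l xl) + op_norm ip (Rs l) * hn (S m.+1 - xl).
  exact: Rs_sub_le.
rewrite (hnBC hip) in hx.
have Ep := E_pos (w2 m) l; have Ewp := E_pos (wm m) l.
have key : a m / 2 * E (w2 m) l <= hn (Rs l xl).
  have h4 : E (wm m) l <= a m / 4 * E (w2 m) l.
    rewrite -ler_pdivlMr ?divr_gt0 // in hEw.
    apply: le_trans hEw _; rewrite le_eqVlt; apply/orP; left; apply/eqP.
    by rewrite mulrC invf_div.
  have h5 : expR (w2 m * L) = E (w2 m) l by [].
  rewrite h5 in hfx.
  have h6 : a m * E (w2 m) l <= a m * hn (Rs l (xs m)) by rewrite ler_pM2l // ltW.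
  lra.
have fx0 : 0 < hn (Rs l xl) by apply: lt_le_trans key; rewrite mulr_gt0 ?divr_gt0.
split => //; apply: q_ge => //.
have : ln (a m / 2 * E (w2 m) l) <= ln (hn (Rs l xl)) by apply: ln_le => //; rewrite mulr_gt0 ?divr_gt0.
rewrite lnM ?posrE ?divr_gt0 // /E expRK.
rewrite -/L; nra.
Qed.

Lemma xl_nz : xl != 0.
Proof.
have [_ /andP [l1 _] h] := lower 0.
by apply/eqP => x0; move: h; rewrite x0 Rs_zero // ltxx.
Qed.

Lemma find_annulus t : 0 < t < rho 0 -> exists n, rho n.+1 <= t < rho n.
Proof.
move=> /andP [t0 t1].
have ex : exists N, rho N <= t.
  have [N hN] := geo_small t0; exists N; apply: le_trans (rho_g N) _; exact: ltW.
have PN : exists N, (fun N => rho N <= t) N by [].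
case: (ex_minnP PN) => N hN hmin.
case: N hN hmin => [|n] hN hmin; first by move: t1; rewrite ltNge hN.
exists n; rewrite hN /= ltNge; apply/negP => h.
by have := hmin n h; rewrite ltnn.
Qed.

Lemma upper e : 0 < e -> exists r : R, 0 < r /\ forall l, 0 < nc l < r -> Q xl l <= s + e.
Proof.
move=> e0.
have [r2 [r20 h2]] := BL (ln 2 / e).
exists (Num.min (rho 0) r2); split; first by rewrite lt_min rho_pos r20.
move=> l /andP [l1]; rewrite lt_min => /andP [lr1 lr2].
have [B1 hL] := h2 l (introT andP (conj l1 lr2)).
have L0 : 0 < ln (B l) by apply: ln_gt0.
have [n /andP [hn1 hn2]] := find_annulus (introT andP (conj l1 lr1)).
have fx := Rs_sub_le xl (S n) l1.
have hU := Uinv (introT andP (conj l1 hn2)).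
have hM : B l <= Mb n by apply: (proj2 (MbP n)); rewrite hn1 /=; apply: le_trans (ltW hn2) (rho_le1 n).
have Bp : 0 < B l by apply: lt_trans B1.
have hth : B l * theta n <= E s l.
  rewrite /theta /E -[B l]lnK ?posrE // -expRD ler_expR.
  have := ln_le Bp hM; rewrite -/(ln (B l)) => hlm.
  have : (s - 1) * ln (Mb n) <= (s - 1) * ln (B l).
    by rewrite ler_wnM2l // subr_le0.
  rewrite expRK; nra.
have htl : B l * hn (xl - S n) <= B l * theta n.
  apply: ler_wpM2l; first exact: ltW.
  exact: le_trans (x_tail1 n) (Ph'_theta n).
have Ep := E_pos s l; have gp := geo_pos R n.
have hf2 : hn (Rs l xl) <= 2 * E s l by nra.
have fp := f_pos l1 xl_nz.
apply: q_le => //.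
have : ln (hn (Rs l xl)) <= ln (2 * E s l) by apply: ln_le.
rewrite lnM ?posrE // /E expRK.
have : ln 2 <= e * ln (B l) by rewrite mulrC -ler_pdivrMr //; exact: ltW.
nra.
Qed.

Lemma constr : exists x, x != 0 /\ k_x ip T x = s%:E.
Proof.
exists xl; split; first exact: xl_nz.
rewrite kxE; apply/eqP; rewrite eq_le; apply/andP; split.
  by apply: Kup => e e0; exact: upper.
apply: Klow => e e0 r r0.
have [n hn] : exists n, g n < Num.min (e / 2) r by apply: geo_small; rewrite lt_min r0 divr_gt0.
move: hn; rewrite lt_min => /andP [hn1 hn2].
have [hq /andP [l1 l2] _] := lower n.+1.
exists (lam n.+1); split.
  rewrite l1 /=; apply: lt_trans hn2; apply: lt_le_trans l2 _; exact: geo_anti.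
apply: le_trans hq.
have := hy_gt n; have := hy_inc n; have := geo_anti R (leqnSn n).
have := geo_pos R n.+1.
rewrite /w2 /wm /=; lra.
Qed.
End Constr.
End Main.

From Stdlib Require Import ClassicalEpsilon.
From mathcomp Require Import all_boot all_order all_algebra complex all_classical all_reals all_analysis.
From mathcomp Require Import ring lra.
Import Order.TTheory GRing.Theory Num.Theory.
Import numFieldNormedType.Exports.
Local Open Scope ring_scope.
Local Open Scope classical_set_scope.

Unset Implicit Arguments.
Theorem theoremA (R : realType) (V : lmodType R[i]) (ip : V -> V -> R[i])
  (hH : hilbert_space ip) (hsep : separable ip) (hinf : infinite_dimensional V)
  (T : V -> V) (hT : quasinilpotent ip T) :
  right_closed (power_set ip T).
Proof.
case: hH => hip hc.
move=> Y Yne YL.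
set Sup := ereal_sup Y.
have [hY|hY] := pselect (Y Sup); first exact: YL.
have le1 : forall z, Y z -> (z <= 1%:E)%E.
  move=> z /YL [x /= x0 <-]; apply: (k_le1 hip hT hc); exact/eqP.
have Sle1 : (Sup <= 1%:E)%E by apply: ge_ereal_sup.
have [y0 Yy0] := Yne.
have y0lt : (y0 < Sup)%E.
  rewrite lt_neqAle ereal_sup_ubound // andbT; apply/eqP => e; apply: hY; by rewrite -e.
have [s Ss] : exists s : R, Sup = s%:E.
  case hS: Sup => [s| |]; first by exists s.
    by move: Sle1; rewrite hS leye_eq.
  by move: y0lt; rewrite hS ltNge leNye.
have hs1 : s <= 1 by rewrite -lee_fin -Ss.
have hnext : forall nt : nat * R, exists yv : R, nt.2 < s ->
    [/\ Y yv%:E, Num.max nt.2 (s - (2^-1) ^+ nt.1) < yv & yv < s].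
  move=> [n t]; apply: contrapT => hno.
  have /ereal_sup_gt [z Yz hz] : ((Num.max t (s - (2^-1) ^+ n))%:E < Sup)%E.
    rewrite Ss lte_fin gt_max; apply: contrapT => hh; apply: hno; exists 0 => /= ts.
    exfalso; apply: hh; rewrite ts /= ltrBlDr ltrDl; exact: geo_pos.
  have zS : (z < Sup)%E.
    rewrite lt_neqAle ereal_sup_ubound // andbT; apply/eqP => e; apply: hY; by rewrite -e.
  move: z Yz hz zS; case => [z| |] Yz hz zS.
  - by apply: hno; exists z => /= ts; split => //; rewrite -lte_fin -Ss.
  - by move: zS; rewrite ltNge leey.
  - by move: hz; rewrite ltNge leNye.
have [F hF] := choice hnext.
pose y := fix y n := match n with 0 => F (0%N, s - 1) | n'.+1 => F (n'.+1, y n') end.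
have hy : forall n, [/\ Y (y n)%:E, Num.max (if n is n'.+1 then y n' else s - 1) (s - (2^-1) ^+ n) < y n & y n < s].
  elim => [|n IH].
    by apply: (hF (0%N, s - 1)) => /=; rewrite ltrBlDr ltrDl.
  by apply: (hF (n.+1, y n)) => /=; case: IH.
have hxs : forall n, exists x : V, x != 0 /\ k_x ip T x = (y n)%:E.
  move=> n; case: (hy n) => /YL [x /= x0 e] _ _; exists x; split => //; exact/eqP.
have [xs hxs'] := choice hxs.
have hy_inc : forall n, y n < y n.+1.
  move=> n; case: (hy n.+1) => _ + _; by rewrite gt_max => /andP [].
have hy_lt : forall n, y n < s by move=> n; case: (hy n).
have hy_gt : forall n, s - (2^-1) ^+ n < y n.
  move=> n; case: (hy n) => _ + _; by rewrite gt_max => /andP [].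
have hx0 : forall n, xs n != 0 by move=> n; case: (hxs' n).
have hkx : forall n, k_x ip T (xs n) = (y n)%:E by move=> n; case: (hxs' n).
have [x [x0 kx]] := constr hip hT hc hs1 hy_inc hy_lt hy_gt hx0 hkx.
rewrite Ss; exists x => //=; exact/eqP.
Qed.
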